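(* Let $\sigma$ be a term ordering on $\mathbb{T}^n$, let $F\subseteq\mathbb{Q}[x_1,\dots,x_n]$ be a set of non-zero polynomials, and let $G_\sigma$ be the reduced $\sigma$-Gröbner basis of the ideal $\langle F\rangle$. Then a prime number $p$ is $\sigma$-Pauer-lucky for $\operatorname{prim}(G_\sigma)$ if and only if $p$ is $\sigma$-good for $\langle F\rangle$.
   Context: $\mathbb{T}^n$ is the monoid of power-products in $x_1,\dots,x_n$; $\mathrm{LC}_\sigma$, $\mathrm{LM}_\sigma$ denote leading coefficient and leading monomial. For $f\in\mathbb{Q}[x_1,\dots,x_n]$, $\operatorname{den}(f)$ is the positive lcm of the denominators of its coefficients; $\operatorname{den}(G)$ is the lcm of $\operatorname{den}(g)$, $g\in G$. A prime $p$ is $\sigma$-good for an ideal $I$ with reduced $\sigma$-Gröbner basis $G_\sigma$ if $p\nmid\operatorname{den}(G_\sigma)$. For non-zero $f$, with $c$ the integer content of $f\cdot\operatorname{den}(f)$, $\operatorname{prim}(f)=c^{-1}f\cdot\operatorname{den}(f)\in\mathbb{Z}[x_1,\dots,x_n]$ and $\operatorname{prim}(G)=\{\operatorname{prim}(g):g\in G\}$. Non-zero $g_1,\dots,g_s\in\mathbb{Z}[x_1,\dots,x_n]$ form a strong $\sigma$-Gröbner basis of $\langle g_1,\dots,g_s\rangle$ if for every non-zero $f$ in this ideal some $\mathrm{LM}_\sigma(g_i)$ divides $\mathrm{LM}_\sigma(f)$; it is minimal if moreover $\mathrm{LM}_\sigma(g_i)\nmid\mathrm{LM}_\sigma(g_j)$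 for $i\neq j$. Given a set $F'$ of non-zero polynomials in $\mathbb{Z}[x_1,\dots,x_n]$ and a minimal strong $\sigma$-Gröbner basis $\tilde G$ of $\langle F'\rangle\subseteq\mathbb{Z}[x_1,\dots,x_n]$, a prime $p$ is $\sigma$-Pauer-lucky for $F'$ if $p$ divides the leading coefficient of no polynomial in $\tilde G$ (this does not depend on the choice of $\tilde G$). *)

(* Defs.v *)
From HB Require Import structures.
From mathcomp Require Import all_boot all_order all_algebra.
From mathcomp Require Import mpoly.

Set Implicit Arguments.
Unset Strict Implicit.
Unset Printing Implicit Defensive.

Import Order.TTheory GRing.Theory Num.Theory.
Local Open Scope ring_scope.

Section GB.
Variable n : nat.

(* Power products T^n are the multinomials 'X_{1..n}; product is (+)%MM,
   divisibility is (<=)%MM, the empty product 1 is 0%MM. *)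

Definition is_term_ordering (sigma : rel 'X_{1..n}) : Prop :=
  [/\ reflexive sigma, antisymmetric sigma, transitive sigma & total sigma]
  /\ ((forall t1 t2 t3, sigma t1 t2 -> sigma (t1 + t3)%MM (t2 + t3)%MM)
    /\ (forall t, sigma 0%MM t)).

Section Leading.
Variable R : ringType.
Variable sigma : rel 'X_{1..n}.

Definition LT (f : {mpoly R[n]}) : 'X_{1..n} :=
  foldr (fun t acc => if sigma acc t then t else acc)
        (head 0%MM (msupp f)) (msupp f).

Definition LC (f : {mpoly R[n]}) : R := f@_(LT f).

Definition LM (f : {mpoly R[n]}) : {mpoly R[n]} := LC f *: 'X_[LT f].
End Leading.

Definition in_ideal (R : comRingType) (F : seq {mpoly R[n]}) (f : {mpoly R[n]})
  : Prop :=
  exists cs : seq {mpoly R[n]},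
    size cs = size F /\ f = \sum_(i < size F) cs`_i * F`_i.

Definition pdvd (R : comRingType) (a b : {mpoly R[n]}) : Prop :=
  exists q : {mpoly R[n]}, b = q * a.

Definition is_GB (sigma : rel 'X_{1..n}) (F G : seq {mpoly rat[n]}) : Prop :=
  (forall g, g \in G -> g != 0 /\ in_ideal F g) /\
  (forall f, in_ideal F f -> f != 0 ->
     exists2 g, g \in G & (LT sigma g <= LT sigma f)%MM).

Definition is_reduced_GB (sigma : rel 'X_{1..n}) (F G : seq {mpoly rat[n]})
  : Prop :=
  [/\ is_GB sigma F G,
      (forall g, g \in G -> LC sigma g = 1)
    & (forall g g', g \in G -> g' \in G -> g != g' ->
         forall t, t \in msupp g -> ~~ (LT sigma g' <= t)%MM)].

Definition den (f : {mpoly rat[n]}) : nat :=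
  \big[lcmn/1%N]_(t <- msupp f) `|denq f@_t|%N.

Definition denG (G : seq {mpoly rat[n]}) : nat :=
  \big[lcmn/1%N]_(g <- G) den g.

(* p is sigma-good for the ideal whose reduced sigma-GB is G *)
Definition sigma_good (p : nat) (G : seq {mpoly rat[n]}) : Prop :=
  ~~ (p %| denG G)%N.

Definition scaled (f : {mpoly rat[n]}) (t : 'X_{1..n}) : int :=
  numq (f@_t * (den f)%:R).

Definition content (f : {mpoly rat[n]}) : nat :=
  \big[gcdn/0%N]_(t <- msupp f) `|scaled f t|%N.

Definition prim (f : {mpoly rat[n]}) : {mpoly int[n]} :=
  \sum_(t <- msupp f) (scaled f t %/ (content f)%:Z)%Z *: 'X_[t].

Definition primG (G : seq {mpoly rat[n]}) : seq {mpoly int[n]} := map prim G.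

Definition is_min_strong_GB (sigma : rel 'X_{1..n})
  (F' Gt : seq {mpoly int[n]}) : Prop :=
  [/\ (forall g, g \in Gt -> g != 0 /\ in_ideal F' g),
      (forall f, in_ideal Gt f <-> in_ideal F' f),
      (forall f, in_ideal F' f -> f != 0 ->
         exists2 g, g \in Gt & pdvd (LM sigma g) (LM sigma f))
    & (forall i j, (i < size Gt)%N -> (j < size Gt)%N -> i != j ->
         ~ pdvd (LM sigma Gt`_i) (LM sigma Gt`_j))].

Definition pauer_lucky (sigma : rel 'X_{1..n}) (p : nat)
  (F' : seq {mpoly int[n]}) : Prop :=
  exists Gt, is_min_strong_GB sigma F' Gt /\
    (forall g, g \in Gt -> ~~ ((p%:Z) %| LC sigma g)%Z).

End GB.

(* Main.v *)
Require Import Defs.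
From HB Require Import structures.
From mathcomp Require Import all_boot all_order all_algebra.
From mathcomp Require Import mpoly.
From mathcomp Require Import zify.
From Stdlib Require Import Classical ClassicalEpsilon.

Set Implicit Arguments.
Unset Strict Implicit.
Unset Printing Implicit Defensive.
Import Order.TTheory GRing.Theory Num.Theory.
Lemma nat_min_after (c : nat -> nat) j :
  exists k, j < k /\ forall k', j < k' -> c k <= c k'.
Proof.
suff H: forall v k, j < k -> c k <= v ->
    exists k, j < k /\ forall k', j < k' -> c k <= c k'.
  exact: (H _ j.+1 (ltnSn j) (leqnn _)).
elim=> [|v IH] k jk ck.
  by exists k; split=> // k' _; move: ck; rewrite leqn0 => /eqP->.
case: (classic (exists k', j < k' /\ c k' < c k)) => [[k' [jk' lt]]|nok].
  by apply: (IH k') => //; lia.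
exists k; split=> // k' jk'; rewrite leqNgt; apply/negP=> lt; apply: nok.
by exists k'.
Qed.

Lemma nat_subseq_mono (c : nat -> nat) : exists phi : nat -> nat,
  {homo phi : i j / i < j} /\ {homo (fun i => c (phi i)) : i j / i <= j}.
Proof.
pose H := fun j => constructive_indefinite_description _ (nat_min_after c j).
pose nx := fun j => proj1_sig (H j).
have Hnx : forall j, j < nx j /\ forall k', j < k' -> c (nx j) <= c k'.
  by move=> j; exact: (proj2_sig (H j)).
exists (fun i => iter i.+1 nx 0); split.
  apply: homo_ltn; first by move=> y x z; apply: ltn_trans.
  by move=> i; case: (Hnx (iter i.+1 nx 0)).
apply: homo_leq => //; first by move=> y x z; apply: leq_trans.
move=> i /=; case: (Hnx (iter i nx 0)) => lt1 H1; apply: H1.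
case: (Hnx (nx (iter i nx 0))) => lt2 _; exact: ltn_trans lt1 lt2.
Qed.

Lemma dickson_sub n (f : nat -> 'X_{1..n}) (s : seq 'I_n) : exists phi : nat -> nat,
  {homo phi : i j / i < j} /\
  forall c, c \in s -> {homo (fun i => f (phi i) c) : i j / i <= j}.
Proof.
elim: s => [|c s [phi [Hphi Hs]]].
  by exists id; split=> // c; rewrite in_nil.
have [psi [Hpsi Hc]] := nat_subseq_mono (fun i => f (phi i) c).
exists (fun i => phi (psi i)); split.
  by move=> i j ij; apply: Hphi; apply: Hpsi.
move=> c'; rewrite inE => /orP[/eqP->|c's] i j ij; first exact: Hc.
by apply: (Hs c' c's); apply: ltnW_homo.
Qed.

Lemma dickson n (f : nat -> 'X_{1..n}) : exists i j, i < j /\ (f i <= f j)%MM.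
Proof.
have [phi [Hphi Hs]] := dickson_sub f (enum 'I_n).
exists (phi 0), (phi 1); split; first exact: Hphi.
by apply/mnm_lepP=> c; apply: (Hs c) => //; rewrite mem_enum.
Qed.

Section TermOrder.
Variable n : nat.
Variable sigma : rel 'X_{1..n}.
Hypothesis Hsig : is_term_ordering sigma.

Lemma sig_refl : reflexive sigma. Proof. by case: Hsig => [[]]. Qed.
Lemma sig_anti : antisymmetric sigma. Proof. by case: Hsig => [[]]. Qed.
Lemma sig_trans : transitive sigma. Proof. by case: Hsig => [[]]. Qed.
Lemma sig_total : total sigma. Proof. by case: Hsig => [[]]. Qed.
Lemma sig_add t1 t2 t3 : sigma t1 t2 -> sigma (t1 + t3)%MM (t2 + t3)%MM.
Proof. by case: Hsig => _ [H _]; apply: H. Qed.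
Lemma sig_0 t : sigma 0%MM t. Proof. by case: Hsig => _ [_ H]. Qed.

Lemma sig_lem t1 t2 : (t1 <= t2)%MM -> sigma t1 t2.
Proof.
move=> le; rewrite -(submK le) addmC -{1}(add0m t1).
by rewrite [X in sigma _ X]addmC; apply: sig_add; apply: sig_0.
Qed.

Definition slt (a b : 'X_{1..n}) := (a != b) && sigma a b.

Lemma slt_wf : well_founded slt.
Proof.
have step : forall x, exists y, ~ Acc slt x -> slt y x /\ ~ Acc slt y.
  move=> x; case: (classic (Acc slt x)) => [ax|nax]; first by exists x.
  case: (classic (exists y, slt y x /\ ~ Acc slt y)) => [[y Hy]|no].
    by exists y.
  exfalso; apply: nax; constructor=> y yx.
  by apply: NNPP => ny; apply: no; exists y.
pose H := fun x => constructive_indefinite_description _ (step x).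
pose nx := fun x => proj1_sig (H x).
have Hnx : forall x, ~ Acc slt x -> slt (nx x) x /\ ~ Acc slt (nx x).
  by move=> x; exact: (proj2_sig (H x)).
move=> x0; apply: NNPP => nacc.
pose f := fun k => iter k nx x0.
have Hf : forall k, ~ Acc slt (f k) /\ slt (f k.+1) (f k).
  elim=> [|k [IH1 IH2]].
    by have [] := Hnx _ nacc.
  have [a1 a2] := Hnx _ IH1; have [b1 b2] := Hnx _ a2; by split.
have chain : forall i j, i <= j -> sigma (f j) (f i).
  move=> i j ij; apply: (@homo_leq _ f (fun a b => sigma b a)) => //.
  - by move=> a; apply: sig_refl.
  - by move=> y a z h1 h2; apply: sig_trans h2 h1.
  - by move=> k; case: (Hf k) => _ /andP[].
have [i [j [ij le]]] := dickson f.
have eqij : f i = f j.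
  by apply: sig_anti; rewrite (sig_lem le) chain // ltnW.
case: (Hf i) => _ /andP[ne s1].
move/negP: ne; apply; apply/eqP; apply: sig_anti; rewrite s1 /=.
have := chain i.+1 j ij; rewrite -eqij /f /=; done.
Qed.

End TermOrder.

Lemma finite_basis n (M : 'X_{1..n} -> Prop) : exists B : seq 'X_{1..n},
  (forall b, b \in B -> M b) /\ (forall t, M t -> exists2 b, b \in B & (b <= t)%MM).
Proof.
apply: NNPP => nob.
have step : forall B : seq 'X_{1..n}, exists t,
    (forall b, b \in B -> M b) -> M t /\ forall b, b \in B -> ~~ (b <= t)%MM.
  move=> B; case: (classic (forall b, b \in B -> M b)) => [BM|nBM]; last first.
    by exists 0%MM.
  case: (classic (exists t, M t /\ forall b, b \in B -> ~~ (b <= t)%MM)).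
    by move=> [t Ht]; exists t.
  move=> no; exfalso; apply: nob; exists B; split=> // t Mt.
  apply: NNPP => nb; apply: no; exists t; split=> // b bB.
  by apply/negP=> bt; apply: nb; exists b.
pose H := fun B => constructive_indefinite_description _ (step B).
pose nx := fun B => proj1_sig (H B).
have Hnx : forall B, (forall b, b \in B -> M b) ->
    M (nx B) /\ forall b, b \in B -> ~~ (b <= nx B)%MM.
  by move=> B; exact: (proj2_sig (H B)).
pose L := fix L k := if k is k'.+1 then rcons (L k') (nx (L k')) else [::].
have LM : forall k b, b \in L k -> M b.
  elim=> [|k IH] b //=; rewrite mem_rcons inE => /orP[/eqP->|]; last exact: IH.
  by case: (Hnx _ IH).
pose f := fun k => nx (L k).
have Lsub : forall i j, i < j -> f i \in L j.
  move=> i; elim=> // j IH; rewrite ltnS leq_eqVlt => /orP[/eqP->|lt] /=;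
    rewrite mem_rcons inE; first by rewrite eqxx.
  by rewrite IH ?orbT.
have [i [j [ij le]]] := dickson f.
by case: (Hnx _ (LM j)) => _ /(_ _ (Lsub _ _ ij)); rewrite le.
Qed.

Section LTth.
Variable n : nat.
Variable sigma : rel 'X_{1..n}.
Hypothesis Hsig : is_term_ordering sigma.
Variable R : idomainType.
Implicit Types f g h d : {mpoly R[n]}.
Local Open Scope ring_scope.

Definition stp (t acc : 'X_{1..n}) := if sigma acc t then t else acc.

Lemma foldr_max x0 s : (foldr stp x0 s \in x0 :: s) /\
  forall m, m \in x0 :: s -> sigma m (foldr stp x0 s).
Proof.
have refl := sig_refl Hsig; have trans := sig_trans Hsig.
elim: s => [|a s [IH1 IH2]] /=.
  split; first by rewrite inE eqxx.
  by move=> m; rewrite inE => /eqP->.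
rewrite /stp; case: ifP => ra.
  split; first by rewrite !inE eqxx orbT.
  move=> m; rewrite !inE => /or3P[/eqP->|/eqP->|ms] //.
    by apply: trans ra; apply: IH2; rewrite inE eqxx.
  by apply: trans ra; apply: IH2; rewrite inE ms orbT.
split.
  by move: IH1; rewrite !inE => /orP[->|->]; rewrite ?orbT.
move=> m; rewrite !inE => /or3P[/eqP->|/eqP->|ms].
- by apply: IH2; rewrite inE eqxx.
- by case/orP: (sig_total Hsig a (foldr stp x0 s)) => //; rewrite ra.
- by apply: IH2; rewrite inE ms orbT.
Qed.

Lemma LT_max f : f != 0 ->
  f@_(LT sigma f) != 0 /\ forall m, f@_m != 0 -> sigma m (LT sigma f).
Proof.
rewrite -msupp_eq0 => nz.
have [H1 H2] := foldr_max (head 0%MM (msupp f)) (msupp f).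
have hs : head 0%MM (msupp f) \in msupp f by case: (msupp f) nz => //= a s _; rewrite inE eqxx.
split.
  rewrite -mcoeff_msupp; move: H1; rewrite inE => /orP[/eqP|] H.
    by rewrite /LT -/stp H.
  by rewrite /LT -/stp.
move=> m; rewrite -mcoeff_msupp => ms; rewrite /LT -/stp; apply: H2.
by rewrite inE ms orbT.
Qed.

Lemma LT_ge f m : f@_m != 0 -> sigma m (LT sigma f).
Proof.
move=> nz; have fnz : f != 0 by apply: contraNneq nz => ->; rewrite mcoeff0.
by have [_ ] := LT_max fnz; apply.
Qed.

Lemma LT_eq f m : f@_m != 0 -> (forall m', f@_m' != 0 -> sigma m' m) ->
  LT sigma f = m.
Proof.
move=> nz H; have fnz : f != 0 by apply: contraNneq nz => ->; rewrite mcoeff0.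
have [H1 H2] := LT_max fnz.
by apply: (sig_anti Hsig); rewrite H // H2.
Qed.

Lemma LC_eq0 f : (LC sigma f == 0) = (f == 0).
Proof.
apply/idP/idP => [H|/eqP->]; last by rewrite /LC mcoeff0.
apply/negPn/negP => nz; have [H1 _] := LT_max nz; move: H; rewrite /LC.
by move: H1 => /negbTE ->.
Qed.

Lemma mcoeffMX' f u k :
  (f * 'X_[u])@_k = if (u <= k)%MM then f@_(k - u)%MM else 0.
Proof.
case: ifP => uk.
  by rewrite -{1}(submK uk) addmC mcoeffMX.
apply/eqP; rewrite mcoeff_eq0; apply/negP.
rewrite (perm_mem (msuppMX f u)) => /mapP [m' _ E].
by move: uk; rewrite E lem_addr.
Qed.

Lemma LT_MX f u : f != 0 ->
  LT sigma (f * 'X_[u]) = (u + LT sigma f)%MM /\ LC sigma (f * 'X_[u]) = LC sigma f.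
Proof.
move=> fnz; have [H1 H2] := LT_max fnz.
have E : LT sigma (f * 'X_[u]) = (u + LT sigma f)%MM.
  apply: LT_eq; first by rewrite mcoeffMX.
  move=> m'; rewrite mcoeffMX'; case: ifP => um; last by rewrite eqxx.
  by move/H2 => /(sig_add Hsig u); rewrite submK // addmC.
by split=> //; rewrite /LC E mcoeffMX.
Qed.

Lemma LT_Z c f : c != 0 ->
  LT sigma (c *: f) = LT sigma f /\ LC sigma (c *: f) = c * LC sigma f.
Proof.
move=> cnz.
have E : LT sigma (c *: f) = LT sigma f.
  case: (eqVneq f 0) => [->|fnz]; first by rewrite scaler0.
  have [H1 H2] := LT_max fnz.
  apply: LT_eq; first by rewrite mcoeffZ mulf_neq0.
  by move=> m'; rewrite mcoeffZ mulf_eq0 negb_or => /andP[_ /H2].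
by split=> //; rewrite /LC E mcoeffZ.
Qed.

Lemma LT_drop d t : d != 0 -> (forall m, d@_m != 0 -> sigma m t) -> d@_t = 0 ->
  slt sigma (LT sigma d) t.
Proof.
move=> dnz H dt; have [H1 H2] := LT_max dnz.
rewrite /slt H // andbT; apply: contraNneq H1 => ->; by rewrite dt.
Qed.

Lemma pdvd_LM_inv f g q : f != 0 -> LM sigma f = q * LM sigma g ->
  (LT sigma g <= LT sigma f)%MM /\
  LC sigma f = q@_(LT sigma f - LT sigma g)%MM * LC sigma g.
Proof.
move=> fnz E.
have := congr1 (mcoeff (LT sigma f)) E.
rewrite /LM -scalerAr !mcoeffZ mcoeffX eqxx mulr1 mcoeffMX'.
case: ifP => le; last by move=> H; move: fnz; rewrite -LC_eq0 H mulr0 eqxx.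
by move=> ->; split=> //; rewrite mulrC.
Qed.

Lemma pdvd_LM f g k : (LT sigma g <= LT sigma f)%MM ->
  LC sigma f = k * LC sigma g -> pdvd (LM sigma g) (LM sigma f).
Proof.
move=> le E; exists (k *: 'X_[LT sigma f - LT sigma g]).
rewrite /LM -scalerAr -scalerAl scalerA -mpolyXD submK // E.
by rewrite mulrC.
Qed.

End LTth.

Section Ideal.
Variable n : nat.
Variable R : comNzRingType.
Implicit Types f g a b q : {mpoly R[n]}.
Implicit Types F H : seq {mpoly R[n]}.
Local Open Scope ring_scope.

Lemma ideal0 F : in_ideal F 0.
Proof.
exists (nseq (size F) 0); rewrite size_nseq; split=> //.
by rewrite big1 // => i _; rewrite nth_nseq; case: ifP; rewrite mul0r.
Qed.

Lemma idealD F a b : in_ideal F a -> in_ideal F b -> in_ideal F (a + b).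
Proof.
move=> [ca [sa ->]] [cb [sb ->]].
exists (mkseq (fun i => ca`_i + cb`_i) (size F)); rewrite size_mkseq; split=> //.
rewrite -big_split; apply: eq_bigr => i _ /=.
by rewrite nth_mkseq // mulrDl.
Qed.

Lemma idealM F q a : in_ideal F a -> in_ideal F (q * a).
Proof.
move=> [ca [sa ->]].
exists (map (fun c => q * c) ca); rewrite size_map; split=> //.
rewrite mulr_sumr; apply: eq_bigr => i _.
by rewrite (nth_map 0) ?sa // mulrA.
Qed.

Lemma idealN F a : in_ideal F a -> in_ideal F (- a).
Proof. by move=> H; rewrite -mulN1r; apply: idealM. Qed.

Lemma idealB F a b : in_ideal F a -> in_ideal F b -> in_ideal F (a - b).
Proof. by move=> Ha Hb; apply: idealD => //; apply: idealN. Qed.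

Lemma idealZ F c a : in_ideal F a -> in_ideal F (c *: a).
Proof. by move=> H; rewrite -mul_mpolyC; apply: idealM. Qed.

Lemma ideal_mem F f : f \in F -> in_ideal F f.
Proof.
move=> fF; exists (mkseq (fun i => (i == index f F)%:R) (size F)).
rewrite size_mkseq; split=> //.
have ilt : (index f F < size F)%N by rewrite index_mem.
rewrite (bigD1 (Ordinal ilt)) //= nth_mkseq // eqxx mul1r nth_index //.
rewrite big1 ?addr0 // => i /eqP ne; rewrite nth_mkseq //.
case: eqP => [E|]; last by rewrite mul0r.
by exfalso; apply: ne; apply: val_inj.
Qed.

Lemma ideal_trans F H f : (forall g, g \in H -> in_ideal F g) ->
  in_ideal H f -> in_ideal F f.
Proof.
move=> HF [cs [_ ->]].
apply: (big_ind (in_ideal F)); first exact: ideal0.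
  by move=> x y; apply: idealD.
by move=> i _; apply: idealM; apply: HF; apply: mem_nth.
Qed.

End Ideal.

Lemma ideal_map n (R S : comNzRingType) (phi : {rmorphism {mpoly R[n]} -> {mpoly S[n]}})
  (F : seq {mpoly R[n]}) f : in_ideal F f -> in_ideal (map phi F) (phi f).
Proof.
move=> [cs [sz ->]]; exists (map phi cs); rewrite !size_map; split=> //.
rewrite rmorph_sum /=; apply: eq_bigr => i _.
by rewrite rmorphM !(nth_map (0 : {mpoly R[n]})%R) ?sz.
Qed.

Section NT.
Local Open Scope ring_scope.

Lemma denq_dvd_of_int (x : rat) (k : int) :
  x * k%:~R \is a Num.int -> (denq x %| k)%Z.
Proof.
move=> xi.
have E : numq x * k = numq (x * k%:~R) * denq x.
  apply/eqP; rewrite -(eqr_int rat) !intrM (numqK xi) (numqE x).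
  by rewrite mulrAC.
have : (denq x %| numq x * k)%Z by rewrite E dvdz_mull // dvdzz.
rewrite Gauss_dvdzr //; rewrite coprimezE coprime_sym; exact: coprime_num_den.
Qed.

Definition pint (p : nat) (x : rat) := ~~ (p %| `|denq x|)%N.

Lemma pintP p x : pint p x <->
  exists k : int, ~~ (p %| `|k|)%N /\ x * k%:~R \is a Num.int.
Proof.
split=> [H|[k [pk xk]]].
  exists (denq x); split=> //; rewrite -numqE; exact: rpred_int.
apply: contra pk => pd; apply: dvdn_trans pd _.
by have := denq_dvd_of_int xk; rewrite dvdzE.
Qed.

Lemma pint_int p (z : int) : prime p -> pint p z%:~R.
Proof. by move=> pp; rewrite /pint denq_int /= dvdn1; case: eqP pp => // ->. Qed.

Lemma pint_mul p x y : prime p -> pint p x -> pint p y -> pint p (x * y).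
Proof.
move=> pp /pintP [kx [px hx]] /pintP [ky [py hy]]; apply/pintP.
exists (kx * ky); split.
  by rewrite abszM Euclid_dvdM // negb_or px py.
by rewrite intrM mulrACA; apply: rpredM.
Qed.

Lemma pint_add p x y : prime p -> pint p x -> pint p y -> pint p (x + y).
Proof.
move=> pp /pintP [kx [px hx]] /pintP [ky [py hy]]; apply/pintP.
exists (kx * ky); split.
  by rewrite abszM Euclid_dvdM // negb_or px py.
rewrite intrM mulrDl; apply: rpredD.
  by rewrite mulrA; apply: rpredM => //; apply: rpred_int.
by rewrite mulrCA; apply: rpredM => //; apply: rpred_int.
Qed.

Lemma pint_opp p x : pint p x -> pint p (- x).
Proof. by rewrite /pint denqN. Qed.

Lemma pint_sub p x y : prime p -> pint p x -> pint p y -> pint p (x - y).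
Proof. by move=> pp hx hy; apply: pint_add => //; apply: pint_opp. Qed.

Lemma pint_inv p (z : int) : prime p -> ~~ (p %| `|z|)%N -> pint p (z%:~R)^-1.
Proof.
move=> pp pz; apply/pintP; exists z; split=> //.
case: (eqVneq z 0) => [->|nz]; first by rewrite mulr0 rpred0.
by rewrite mulVf ?intr_eq0 // rpred1.
Qed.

Lemma prime_dvd_biglcm (T : eqType) p (s : seq T) (F : T -> nat) : prime p ->
  (p %| \big[lcmn/1%N]_(x <- s) F x)%N -> exists2 x, x \in s & (p %| F x)%N.
Proof.
move=> pp; elim: s => [|a s IH]; first by rewrite big_nil dvdn1; case: eqP pp => // ->.
rewrite big_cons => H.
have : (p %| F a * \big[lcmn/1%N]_(x <- s) F x)%N.
  by rewrite -muln_lcm_gcd dvdn_mulr.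
rewrite Euclid_dvdM // => /orP[pa|ps]; first by exists a; rewrite ?inE ?eqxx.
by have [x xs px] := IH ps; exists x; rewrite // inE xs orbT.
Qed.

Lemma dvd_biglcm (T : eqType) (s : seq T) (F : T -> nat) x : x \in s ->
  (F x %| \big[lcmn/1%N]_(y <- s) F y)%N.
Proof.
elim: s => // a s IH; rewrite inE big_cons => /orP[/eqP->|xs].
  exact: dvdn_lcml.
exact: dvdn_trans (IH xs) (dvdn_lcmr _ _).
Qed.

Lemma biglcm_gt0 (T : Type) (s : seq T) (F : T -> nat) :
  (forall x, 0 < F x)%N -> (0 < \big[lcmn/1%N]_(y <- s) F y)%N.
Proof.
move=> H; elim: s => [|a s IH]; first by rewrite big_nil.
by rewrite big_cons lcmn_gt0 H IH.
Qed.

Lemma dvd_biggcd (T : eqType) (s : seq T) (F : T -> nat) x : x \in s ->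
  (\big[gcdn/0%N]_(y <- s) F y %| F x)%N.
Proof.
elim: s => // a s IH; rewrite inE big_cons => /orP[/eqP->|xs].
  exact: dvdn_gcdl.
exact: dvdn_trans (dvdn_gcdr _ _) (IH xs).
Qed.

Lemma biggcd_gt0 (T : eqType) (s : seq T) (F : T -> nat) x : x \in s ->
  (0 < F x)%N -> (0 < \big[gcdn/0%N]_(y <- s) F y)%N.
Proof.
elim: s => // a s IH; rewrite inE big_cons => /orP[/eqP->|xs] H.
  by rewrite gcdn_gt0 H.
by rewrite gcdn_gt0 IH ?orbT.
Qed.

End NT.

Section Prim.
Variable n : nat.
Local Open Scope ring_scope.
Implicit Types g : {mpoly rat[n]}.

Definition Kq (f : {mpoly int[n]}) : {mpoly rat[n]} := map_mpoly (intr : int -> rat) f.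

Lemma mcoeff_sumX (R : nzRingType) (s : seq 'X_{1..n}) (c : 'X_{1..n} -> R) m :
  uniq s -> (\sum_(t <- s) c t *: 'X_[t])@_m = if m \in s then c m else 0.
Proof.
elim: s => [|a s IH]; first by rewrite big_nil mcoeff0.
rewrite big_cons /= => /andP[aS us]; rewrite mcoeffD mcoeffZ mcoeffX IH // inE.
case: (eqVneq a m) aS => [->|ne] aS /=.
  by rewrite (negbTE aS) mulr1 addr0.
by rewrite mulr0 add0r.
Qed.

Lemma den_gt0 g : (0 < den g)%N.
Proof. by apply: biglcm_gt0 => x; rewrite absz_gt0 denq_neq0. Qed.

Lemma denq_dvd_den g t : (`|denq g@_t| %| den g)%N.
Proof.
case: (eqVneq g@_t 0) => [->|nz]; first by rewrite (denq_int 0).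
by apply: dvd_biglcm; rewrite mcoeff_msupp.
Qed.

Lemma scaled_int g t : (scaled g t)%:~R = g@_t * (den g)%:R.
Proof.
rewrite /scaled numqK //.
have := denq_dvd_den g t; rewrite -(dvdzE (denq _) (den g)) => /dvdzP [q Hq].
rewrite -[(den g)%:R]/((den g)%:Z%:~R) Hq intrM mulrCA -numqE.
by apply: rpredM; apply: rpred_int.
Qed.

Lemma scaled_neq0 g t : g@_t != 0 -> scaled g t != 0.
Proof.
move=> nz; rewrite -(intr_eq0 rat) scaled_int mulf_neq0 //.
by rewrite pnatr_eq0 -lt0n den_gt0.
Qed.

Lemma content_gt0 g : g != 0 -> (0 < content g)%N.
Proof.
rewrite -msupp_eq0; case E: (msupp g) => [|t s] // _.
apply: (@biggcd_gt0 _ _ _ t); first by rewrite E inE eqxx.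
rewrite absz_gt0 scaled_neq0 // -mcoeff_msupp E inE eqxx //.
Qed.

Lemma Kq_prim g : g != 0 ->
  Kq (prim g) = ((den g)%:R / (content g)%:R) *: g.
Proof.
move=> gnz; apply/mpolyP => m.
rewrite /Kq mcoeff_map_mpoly /prim mcoeff_sumX ?msupp_uniq // mcoeffZ.
case: ifP => ms; last by move/negbT: ms; rewrite mcoeff_msupp negbK => /eqP->; rewrite mulr0.
have cd : ((content g)%:Z %| scaled g m)%Z.
  by rewrite dvdzE /=; apply: dvd_biggcd.
have c0 : (content g)%:R != 0 :> rat by rewrite pnatr_eq0 -lt0n content_gt0.
apply: (mulIf c0); rewrite -[(content g)%:R]/((content g)%:Z%:~R) -intrM divzK //.
rewrite scaled_int /= mulrAC divfK //; first by rewrite mulrC.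
Qed.

Lemma msupp_Kq (f : {mpoly int[n]}) : msupp (Kq f) =i msupp f.
Proof. by move=> m; rewrite !mcoeff_msupp /Kq mcoeff_map_mpoly intr_eq0. Qed.

Lemma mcoeff_Kq (f : {mpoly int[n]}) m : (Kq f)@_m = (f@_m)%:~R.
Proof. by rewrite /Kq mcoeff_map_mpoly. Qed.

Lemma Kq_eq0 (f : {mpoly int[n]}) : (Kq f == 0) = (f == 0).
Proof.
apply/eqP/eqP => [H|->]; last by rewrite /Kq raddf0.
apply/mpolyP => m; have := congr1 (fun q => q@_m) H; rewrite /= mcoeff_Kq mcoeff0 => /eqP.
by rewrite intr_eq0 mcoeff0 => /eqP.
Qed.

End Prim.

Section Main.
Variable n : nat.
Variable sigma : rel 'X_{1..n}.
Hypothesis Hsig : is_term_ordering sigma.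
Variables F G : seq {mpoly rat[n]}.
Hypothesis HG : is_reduced_GB sigma F G.
Variable p : nat.
Hypothesis pp : prime p.
Local Open Scope ring_scope.

Local Notation LTs := (LT sigma).

Lemma slt_le_trans a u t : sigma a u -> slt sigma u t -> slt sigma a t.
Proof.
move=> au /andP[ut st]; rewrite /slt (sig_trans Hsig au st) andbT.
apply: contraNneq ut => at_; apply/eqP; apply: (sig_anti Hsig).
by rewrite st -at_.
Qed.

Lemma slt_trans' a u t : slt sigma a u -> slt sigma u t -> slt sigma a t.
Proof. by move=> /andP[_ au]; apply: slt_le_trans. Qed.

Lemma LT_Kq f : LTs (Kq f) = LTs f.
Proof.
case: (eqVneq f 0) => [->|fnz].
  have m0 : forall R : nzRingType, msupp (0 : {mpoly R[n]}) = [::].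
    by move=> R; apply/eqP; rewrite msupp_eq0.
  by rewrite /Kq raddf0 /LT !m0.
have [H1 H2] := LT_max Hsig fnz.
apply: LT_eq => //; first by rewrite mcoeff_Kq intr_eq0.
by move=> m'; rewrite mcoeff_Kq intr_eq0; apply: H2.
Qed.

Lemma LC_Kq f : LC sigma (Kq f) = (LC sigma f)%:~R.
Proof. by rewrite /LC LT_Kq mcoeff_Kq. Qed.

Lemma G_nz g : g \in G -> g != 0.
Proof. by case: HG => [[H _] _ _] /H []. Qed.

Lemma G_J g : g \in G -> in_ideal F g.
Proof. by case: HG => [[H _] _ _] /H []. Qed.

Lemma G_LC g : g \in G -> LC sigma g = 1.
Proof. by case: HG => _ H _; apply: H. Qed.

Lemma J_GB f : in_ideal F f -> f != 0 -> exists2 g, g \in G & (LTs g <= LTs f)%MM.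
Proof. by case: HG => [[_ H] _ _]; apply: H. Qed.

Lemma Kq_prim_J g : g \in G -> in_ideal F (Kq (prim g)).
Proof. by move=> gG; rewrite (Kq_prim (G_nz gG)); apply: idealZ; apply: G_J. Qed.

Lemma I_J f : in_ideal (primG G) f -> in_ideal F (Kq f).
Proof.
move=> H; have := ideal_map (map_mpoly (intr : int -> rat)) H.
apply: ideal_trans => g /mapP [h /mapP [g0 g0G ->] ->].
exact: Kq_prim_J.
Qed.

Lemma prim_nz g : g \in G -> prim g != 0.
Proof.
move=> gG; rewrite -Kq_eq0 (Kq_prim (G_nz gG)) scaler_eq0 negb_or (G_nz gG) andbT.
rewrite mulf_neq0 // ?invr_eq0 pnatr_eq0 -lt0n ?den_gt0 //.
by rewrite content_gt0 // G_nz.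
Qed.

Lemma LT_prim g : g \in G -> LTs (prim g) = LTs g.
Proof.
move=> gG; rewrite -LT_Kq (Kq_prim (G_nz gG)).
case: (LT_Z Hsig g (_ : (den g)%:R / (content g)%:R != 0)) => // .
rewrite mulf_neq0 // ?invr_eq0 pnatr_eq0 -lt0n ?den_gt0 //.
by rewrite content_gt0 // G_nz.
Qed.

Lemma prim_I g : g \in G -> in_ideal (primG G) (prim g).
Proof. by move=> gG; apply: ideal_mem; apply: map_f. Qed.

Lemma pint0 : pint p 0. Proof. by have := pint_int 0 pp. Qed.
Lemma pint1 : pint p 1. Proof. by have := pint_int 1 pp. Qed.

Lemma pintX t m : pint p ('X_[t] : {mpoly rat[n]})@_m.
Proof. by rewrite mcoeffX; case: eqP => _; [exact: pint1 | exact: pint0]. Qed.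

Lemma pint_scale_MX c (f : {mpoly rat[n]}) u m : pint p c -> (forall m, pint p f@_m) ->
  pint p (c *: (f * 'X_[u]))@_m.
Proof.
move=> pc pf; rewrite mcoeffZ mcoeffMX'; apply: pint_mul => //.
by case: ifP => _ //; exact: pint0.
Qed.

Definition normal (b : {mpoly rat[n]}) :=
  forall m, b@_m != 0 -> forall g', g' \in G -> ~~ (LTs g' <= m)%MM.

Lemma reduce_pint t :
  (forall g', g' \in G -> slt sigma (LTs g') t -> forall m, pint p g'@_m) ->
  forall f, in_ideal F f -> (f = 0 \/ slt sigma (LTs f) t) ->
  forall a b, f = a + b -> (forall m, pint p a@_m) -> normal b ->
  forall m, pint p b@_m.
Proof.
move=> Hsmall.
suff H : forall u f, in_ideal F f -> f != 0 -> LTs f = u -> slt sigma u t ->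
  forall a b, f = a + b -> (forall m, pint p a@_m) -> normal b ->
  forall m, pint p b@_m.
  move=> f fJ [f0|lt] a b E pa nb m.
    have -> : b = - a by apply/eqP; rewrite -subr_eq0 opprK addrC -E f0.
    by rewrite mcoeffN; apply: pint_opp.
  case: (eqVneq f 0) => [f0|fnz].
    have -> : b = - a by apply/eqP; rewrite -subr_eq0 opprK addrC -E f0.
    by rewrite mcoeffN; apply: pint_opp.
  exact: (H _ f fJ fnz erefl lt a b E pa nb).
elim/(well_founded_ind (slt_wf Hsig)) => u IH f fJ fnz fu ut a b E pa nb.
have [g' g'G le] := J_GB fJ fnz.
rewrite fu in le.
have g'nz := G_nz g'G.
have g'small : slt sigma (LTs g') t.
  by apply: slt_le_trans ut; apply: (sig_lem Hsig).
have pg' := Hsmall g' g'G g'small.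
have bu : b@_u = 0.
  apply/eqP/negP => /negP nz; have := nb u nz g' g'G; by rewrite le.
set cf := f@_u.
have pcf : pint p cf by rewrite /cf E mcoeffD bu addr0.
set q := g' * 'X_[u - LTs g'].
have [Lq Cq] := LT_MX Hsig (u - LTs g')%MM g'nz.
rewrite -/q submK // in Lq.
rewrite -/q (G_LC g'G) in Cq.
set f' := f - cf *: q.
have f'J : in_ideal F f'.
  apply: idealB => //; apply: idealZ; rewrite /q mulrC; apply: idealM.
  exact: G_J.
have E' : f' = (a - cf *: q) + b by rewrite /f' E addrAC.
have pa' : forall m, pint p (a - cf *: q)@_m.
  move=> m; rewrite mcoeffB; apply: pint_sub => //; exact: pint_scale_MX.
case: (eqVneq f' 0) => [f'0|f'nz].
  move=> m.
  have -> : b = - (a - cf *: q) by apply/eqP; rewrite -subr_eq0 opprK addrC -E' f'0.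
  by rewrite mcoeffN; apply: pint_opp.
have lt' : slt sigma (LTs f') u.
  apply: LT_drop => //.
    move=> m; rewrite /f' mcoeffB mcoeffZ.
    case: (eqVneq f@_m 0) => [->|fm].
      rewrite sub0r oppr_eq0 mulf_eq0 negb_or => /andP[_ qm].
      by rewrite -Lq; apply: LT_ge.
    by move=> _; rewrite -fu; apply: LT_ge.
  have Cq' : q@_u = 1 by rewrite -Lq.
  by rewrite /f' mcoeffB mcoeffZ Cq' mulr1 /cf subrr.
apply: (IH (LTs f') lt' f' f'J f'nz erefl _ _ _ E' pa' nb).
exact: slt_trans' lt' ut.
Qed.

Lemma bad_min g0 : g0 \in G -> ~ (forall m, pint p g0@_m) ->
  exists2 g, g \in G /\ ~ (forall m, pint p g@_m) &
    forall g', g' \in G -> slt sigma (LTs g') (LTs g) -> forall m, pint p g'@_m.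
Proof.
move=> g0G bad0.
suff H : forall u g, g \in G -> ~ (forall m, pint p g@_m) -> LTs g = u ->
  exists2 g, g \in G /\ ~ (forall m, pint p g@_m) &
    forall g', g' \in G -> slt sigma (LTs g') (LTs g) -> forall m, pint p g'@_m.
  exact: (H _ g0 g0G bad0 erefl).
elim/(well_founded_ind (slt_wf Hsig)) => u IH g gG bad gu.
case: (classic (exists2 g', g' \in G /\ ~ (forall m, pint p g'@_m) &
   slt sigma (LTs g') u)) => [[g' [g'G bad'] lt]|no].
  exact: (IH _ lt g' g'G bad' erefl).
exists g => // g' g'G lt; apply: NNPP => bad'; apply: no; exists g' => //.
by rewrite -gu.
Qed.

Lemma dirA : pauer_lucky sigma p (primG G) -> sigma_good p G.
Proof.
move=> [Gt [[Gt1 Gt2 Gt3 Gt4] HLC]].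
rewrite /sigma_good; apply/negP => pd.
have [g0 g0G pg0] := prime_dvd_biglcm pp pd.
have [t0 _ pt0] := prime_dvd_biglcm pp pg0.
have bad0 : ~ (forall m, pint p g0@_m) by move/(_ t0); rewrite /pint pt0.
have [g [gG badg] Hsmall] := bad_min g0G bad0.
set t := LTs g.
have gnz := G_nz gG.
have h0I := prim_I gG.
have h0nz := prim_nz gG.
have [gt gtGt] := Gt3 _ h0I h0nz.
case=> q Eq.
have [gtnz gtI] := Gt1 _ gtGt.
have [le _] := pdvd_LM_inv Hsig h0nz Eq.
rewrite LT_prim // -/t in le.
set s := LTs gt in le.
set c := LC sigma gt.
have pc : ~~ (p %| `|c|)%N by have := HLC _ gtGt.
have cnz : c != 0 by rewrite /c LC_eq0.
have Kgtnz : Kq gt != 0 by rewrite Kq_eq0.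
set h := (c%:~R)^-1 *: (Kq gt * 'X_[t - s]).
have [L1 C1] := LT_MX Hsig (t - s)%MM Kgtnz.
rewrite LT_Kq -/s submK // in L1.
rewrite LC_Kq -/c in C1.
have cQ : (c%:~R : rat) != 0 by rewrite intr_eq0.
have ciQ : (c%:~R : rat)^-1 != 0 by rewrite invr_eq0.
have [L2 C2] := LT_Z Hsig (Kq gt * 'X_[t - s]) ciQ.
rewrite L1 -/h in L2.
rewrite C1 mulVf // -/h in C2.
have hJ : in_ideal F h.
  by apply: idealZ; rewrite mulrC; apply: idealM; apply: I_J.
have ph : forall m, pint p h@_m.
  move=> m; apply: pint_scale_MX; first exact: pint_inv.
  by move=> m'; rewrite mcoeff_Kq; apply: pint_int.
have Eab : h - g = (h - 'X_[t]) + ('X_[t] - g) by rewrite addrA subrK.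
have key := @reduce_pint t Hsmall (h - g) (idealB hJ (G_J gG)).
have pb : forall m, pint p ('X_[t] - g)@_m.
  apply: (key _ (h - 'X_[t]) ('X_[t] - g)).
  - case: (eqVneq (h - g) 0) => [->|nz]; [by left|right].
    apply: LT_drop => //.
      move=> m; rewrite mcoeffB; case: (eqVneq h@_m 0) => [->|hm].
        by rewrite sub0r oppr_eq0 => gm; apply: LT_ge.
      by move=> _; rewrite -L2; apply: LT_ge.
    by rewrite mcoeffB -L2 -/(LC sigma h) C2 L2 /t -/(LC sigma g) (G_LC gG) subrr.
  - exact: Eab.
  - by move=> m; rewrite mcoeffB; apply: pint_sub => //; apply: pintX.
  - move=> m; rewrite mcoeffB mcoeffX.
    case: (eqVneq t m) => [<-|tm].
      by rewrite /t -/(LC sigma g) G_LC // subrr eqxx.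
    rewrite sub0r oppr_eq0 => gm g' g'G.
    case: (eqVneq g g') => [<-|ne].
      apply/negP => /(sig_lem Hsig) tm'; move/negP: tm; apply.
      by apply/eqP; apply: (sig_anti Hsig); rewrite tm' LT_ge.
    by case: HG => _ _ H; apply: (H g g') => //; rewrite mcoeff_msupp.
apply: badg => m; have := pint_sub pp (pintX t m) (pb m).
by rewrite -mcoeffB opprB addrC subrK.
Qed.


Definition rdiv (x y : {mpoly int[n]}) :=
  (LTs x <= LTs y)%MM && (LC sigma x %| LC sigma y)%Z.

Lemma rdiv_refl : reflexive rdiv.
Proof. by move=> x; rewrite /rdiv lepm_refl dvdzz. Qed.

Lemma rdiv_trans : transitive rdiv.
Proof.
move=> y x z /andP[l1 d1] /andP[l2 d2].
by rewrite /rdiv (lepm_trans l1 l2) (dvdz_trans d1 d2).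
Qed.

Lemma LC_prim g : g \in G -> LC sigma (prim g) * (content g)%:Z = (den g)%:Z.
Proof.
move=> gG; apply/eqP; rewrite -(eqr_int rat) intrM -LC_Kq (Kq_prim (G_nz gG)).
have c0 : (content g)%:R != 0 :> rat by rewrite pnatr_eq0 -lt0n content_gt0 // G_nz.
have knz : ((den g)%:R / (content g)%:R : rat) != 0.
  by rewrite mulf_neq0 // ?invr_eq0 // pnatr_eq0 -lt0n den_gt0.
have [_ ->] := LT_Z Hsig g knz.
rewrite G_LC // mulr1.
have -> : ((content g)%:Z%:~R : rat) = (content g)%:R by [].
by rewrite divfK.
Qed.

Lemma lc_small f : in_ideal (primG G) f -> f != 0 ->
  exists e : nat, [/\ (0 < e)%N, (e %| denG G)%N, ((e : int) %| LC sigma f)%Z &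
    exists h, [/\ in_ideal (primG G) h, h != 0, LTs h = LTs f & LC sigma h = e%:Z]].
Proof.
move=> fI fnz.
have Kfnz : Kq f != 0 by rewrite Kq_eq0.
have [g gG le] := J_GB (I_J fI) Kfnz.
rewrite LT_Kq in le.
set h0 := prim g * 'X_[LTs f - LTs g].
have h0I : in_ideal (primG G) h0 by rewrite /h0 mulrC; apply: idealM; apply: prim_I.
have [L0 C0] := LT_MX Hsig (LTs f - LTs g)%MM (prim_nz gG).
rewrite LT_prim // submK // -/h0 in L0.
rewrite -/h0 in C0.
set l := LC sigma (prim g) in C0.
have lnz : l != 0 by rewrite /l (LC_eq0 Hsig) (prim_nz gG).
have [u [v Huv]] := Bezoutz (LC sigma f) l.
set e := gcdn `|LC sigma f| `|l|.
have e0 : (0 < e)%N by rewrite gcdn_gt0 !absz_gt0 lnz orbT.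
set h := u *: f + v *: h0.
have hI : in_ideal (primG G) h by apply: idealD; apply: idealZ.
have hLT : h@_(LTs f) = e%:Z.
  rewrite /h mcoeffD !mcoeffZ -/(LC sigma f).
  have -> : h0@_(LTs f) = l by rewrite -C0 /LC L0.
  by rewrite Huv.
have e0' : (e%:Z : int) != 0 by rewrite eqz_nat -lt0n.
have LTh : LTs h = LTs f.
  apply: (LT_eq Hsig); first by rewrite hLT.
  move=> m; rewrite /h mcoeffD !mcoeffZ.
  case: (eqVneq f@_m 0) => [->|fm]; last by move=> _; apply: LT_ge.
  rewrite mulr0 add0r mulf_eq0 negb_or => /andP[_ hm].
  by rewrite -L0; apply: LT_ge.
exists e; split=> //.
- apply: dvdn_trans (dvdn_gcdr _ _) _.
  apply: dvdn_trans (dvd_biglcm _ gG).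
  have := congr1 absz (LC_prim gG); rewrite abszM /= => <-.
  exact: dvdn_mulr.
- by rewrite dvdzE /=; apply: dvdn_gcdl.
- exists h; split=> //; last by rewrite /LC LTh hLT.
  by rewrite -(LC_eq0 Hsig) /LC LTh hLT.
Qed.

Lemma prune (T : eqType) (r : rel T) : reflexive r -> transitive r ->
  forall s : seq T, exists s', [/\ {subset s' <= s},
    (forall x, x \in s -> exists2 y, y \in s' & r y x), uniq s' &
    (forall x y, x \in s' -> y \in s' -> x != y -> ~~ r x y)].
Proof.
move=> refl tr; elim=> [|x s [s' [sub cov us anti]]].
  by exists [::]; split.
case: (boolP (has (fun y => r y x) s')) => [/hasP [y ys ryx]|nh].
  exists s'; split => //.
  - by move=> z /sub zs; rewrite inE zs orbT.
  - move=> z; rewrite inE => /orP[/eqP->|zs]; first by exists y.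
    exact: cov.
exists (x :: filter (fun y => ~~ r x y) s'); split.
- move=> z; rewrite inE => /orP[/eqP->|]; first by rewrite inE eqxx.
  by rewrite mem_filter => /andP[_ /sub zs]; rewrite inE zs orbT.
- move=> z; rewrite inE => /orP[/eqP->|zs]; first by exists x; rewrite ?inE ?eqxx.
  have [y ys ryz] := cov z zs.
  case: (boolP (r x y)) => rxy.
    by exists x; rewrite ?inE ?eqxx //; apply: tr ryz.
  by exists y => //; rewrite inE mem_filter rxy ys orbT.
- by rewrite /= filter_uniq // andbT mem_filter refl.
- move=> a b; rewrite !inE !mem_filter.
  case/orP=> [/eqP->|/andP[nxa aS]]; case/orP=> [/eqP->|/andP[nxb bS]] ab //.
  + by rewrite eqxx in ab.
  + by apply/negP => rax; move/hasP: nh; apply; exists a.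
  + exact: anti.
Qed.

Lemma dirB : sigma_good p G -> pauer_lucky sigma p (primG G).
Proof.
move=> good.
set D := denG G.
have D0 : (0 < D)%N by apply: biglcm_gt0 => g; apply: den_gt0.
pose M e t := exists h, [/\ in_ideal (primG G) h, h != 0, LTs h = t & LC sigma h = e%:Z].
pose HB e := constructive_indefinite_description _ (finite_basis (M e)).
pose Bf e := proj1_sig (HB e).
have HBf : forall e, (forall b, b \in Bf e -> M e b) /\
    (forall t, M e t -> exists2 b, b \in Bf e & (b <= t)%MM).
  by move=> e; exact: (proj2_sig (HB e)).
have HW : forall e t, exists h, M e t ->
    [/\ in_ideal (primG G) h, h != 0, LTs h = t & LC sigma h = e%:Z].
  move=> e t; case: (classic (M e t)) => [[h Hh]|nM]; first by exists h.
  by exists 0.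
pose W e t := proj1_sig (constructive_indefinite_description _ (HW e t)).
have HWs : forall e t, M e t ->
    [/\ in_ideal (primG G) (W e t), W e t != 0, LTs (W e t) = t & LC sigma (W e t) = e%:Z].
  by move=> e t; exact: (proj2_sig (constructive_indefinite_description _ (HW e t))).
set C := flatten [seq [seq W e b | b <- Bf e] | e <- divisors D].
have HC : forall c, c \in C -> [/\ in_ideal (primG G) c, c != 0 &
    exists2 e, e \in divisors D & LC sigma c = e%:Z].
  move=> c /flattenP [s /mapP [e eD ->] /mapP [b bB ->]].
  have [h1 h2 h3 h4] := HWs e b ((HBf e).1 b bB).
  by split=> //; exists e.
have strongC : forall f, in_ideal (primG G) f -> f != 0 -> exists2 c, c \in C & rdiv c f.
  move=> f fI fnz.
  have [e [e0 eD edv [h [h1 h2 h3 h4]]]] := lc_small fI fnz.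
  have Me : M e (LTs f) by exists h.
  have [b bB bl] := (HBf e).2 _ Me.
  have [w1 w2 w3 w4] := HWs e b ((HBf e).1 b bB).
  exists (W e b).
    apply/flattenP; exists [seq W e b0 | b0 <- Bf e]; last exact: map_f.
    by apply: map_f; rewrite -dvdn_divisors.
  by rewrite /rdiv w3 bl w4.
have [Gt [sub cov us anti]] := prune rdiv_refl rdiv_trans C.
have strongGt : forall f, in_ideal (primG G) f -> f != 0 -> exists2 y, y \in Gt & rdiv y f.
  move=> f fI fnz; have [c cC rcf] := strongC f fI fnz.
  have [y yG ryc] := cov c cC; exists y => //; exact: rdiv_trans rcf.
have GtI : forall g, g \in Gt -> g != 0 /\ in_ideal (primG G) g.
  by move=> g /sub /HC [h1 h2 _].
have gen : forall f, in_ideal (primG G) f -> in_ideal Gt f.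
  suff H : forall u f, in_ideal (primG G) f -> f != 0 -> LTs f = u -> in_ideal Gt f.
    move=> f fI; case: (eqVneq f 0) => [->|fnz]; first exact: ideal0.
    exact: (H _ f fI fnz erefl).
  elim/(well_founded_ind (slt_wf Hsig)) => u IH f fI fnz fu.
  have [y yG /andP[le dv]] := strongGt f fI fnz.
  have [ynz yI] := GtI y yG.
  set k := (LC sigma f %/ LC sigma y)%Z.
  set q := y * 'X_[LTs f - LTs y].
  have [Lq Cq] := LT_MX Hsig (LTs f - LTs y)%MM ynz.
  rewrite submK // -/q in Lq.
  rewrite -/q in Cq.
  have qGt : in_ideal Gt (k *: q).
    by apply: idealZ; rewrite /q mulrC; apply: idealM; apply: ideal_mem.
  set f' := f - k *: q.
  have Ef : f = f' + k *: q by rewrite /f' subrK.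
  rewrite Ef; apply: idealD => //.
  case: (eqVneq f' 0) => [->|f'nz]; first exact: ideal0.
  have f'I : in_ideal (primG G) f'.
    apply: idealB => //; apply: idealZ; rewrite /q mulrC; apply: idealM => //.
  have lt : slt sigma (LTs f') u.
    rewrite -fu; apply: LT_drop => //.
      move=> m; rewrite /f' mcoeffB mcoeffZ.
      case: (eqVneq f@_m 0) => [->|fm]; last by move=> _; apply: LT_ge.
      rewrite sub0r oppr_eq0 mulf_eq0 negb_or => /andP[_ qm].
      by rewrite -Lq; apply: LT_ge.
    rewrite /f' mcoeffB mcoeffZ.
    have -> : q@_(LTs f) = LC sigma y by rewrite -Cq /LC Lq.
    by rewrite /k divzK // -/(LC sigma f) subrr.
  exact: (IH _ lt f' f'I f'nz erefl).
exists Gt; split; first split.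
- exact: GtI.
- move=> f; split; last exact: gen.
  by apply: ideal_trans => g /GtI [].
- move=> f fI fnz; have [y yG /andP[le dv]] := strongGt f fI fnz.
  exists y => //; apply: (pdvd_LM (k := (LC sigma f %/ LC sigma y)%Z)) => //.
  by rewrite divzK.
- move=> i j ilt jlt ij [q Eq].
  have xi := mem_nth 0 ilt; have xj := mem_nth 0 jlt.
  have [xjnz _] := GtI _ xj.
  have [le Hd] := pdvd_LM_inv Hsig xjnz Eq.
  have ne : Gt`_i != Gt`_j by rewrite nth_uniq.
  move/negP: (anti _ _ xi xj ne); apply.
  by rewrite /rdiv le Hd dvdz_mull.
- move=> g gGt; have [_ _ [e eD ->]] := HC g (sub g gGt).
  rewrite dvdzE /=; apply/negP => pe; move/negP: good; apply.
  by apply: dvdn_trans pe _; rewrite dvdn_divisors.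
Qed.

End Main.

Theorem corollary3p19 (n : nat) (sigma : rel 'X_{1..n})
  (F G : seq {mpoly rat[n]}) (p : nat) :
  is_term_ordering sigma ->
  (forall f, f \in F -> f != 0%R) ->
  is_reduced_GB sigma F G ->
  prime p ->
  pauer_lucky sigma p (primG G) <-> sigma_good p G.
Proof.
move=> Hsig _ HG pp; split; [exact: (dirA Hsig HG pp) | exact: (dirB Hsig HG)].
Qed.
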